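(* Let $\lambda>1$ and let $(a_n)_{n\ge1}$, $(b_n)_{n\ge1}$ be real sequences with $a\doteq\sup_{n\ge1}a_n<\infty$ and $b_n\ge0$ for all $n$. Assume $a\ge(\lambda-1)[1-\ln(\lambda-1)]$ and let $u^*$ be the smallest positive fixed point of $f(u)=u^{\lambda}e^{a-u}$. Let $\{x_n\}$ be a non-negative solution of $$x_{n+1}=x_{n-1}^{\lambda}e^{a_n-b_nx_n-x_{n-1}},\qquad n\ge1.$$ If $x_k\in(0,u^* )$ for some $k\ge0$, then the terms $x_k,x_{k+2},x_{k+4},\dots$ are strictly decreasing and converge to $0$.
   Context: When $\lambda>1$ and $a\ge(\lambda-1)[1-\ln(\lambda-1)]$, the map $f(u)=u^\lambda e^{a-u}$ on $[0,\infty)$ has at least one positive fixed point; $u^*$ denotes the smallest one (the Allee fixed point of $f$). *)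

(* Defs.v *)
From Stdlib Require Import Reals Lra.
Open Scope R_scope.

(* Real power u^y for u >= 0, with the convention 0^y = 0 (y > 0 in use).
   Stdlib's Rpower 0 y = exp (y * ln 0) = 1, so we patch the value at 0. *)
Definition rpow (u y : R) : R := if Rle_dec u 0 then 0 else Rpower u y.

Definition fmap (lam a u : R) : R := rpow u lam * exp (a - u).

Definition smallest_pos_fixed_point (lam a u : R) : Prop :=
  0 < u /\ fmap lam a u = u /\
  (forall v, 0 < v -> fmap lam a v = v -> u <= v).

(* Main.v *)
Require Import Defs.
From Stdlib Require Import Reals Lra Lia.
Open Scope R_scope.

Definition FF (lam a t : R) : R := exp (lam * ln t + (a - t)).

Lemma fmap_FF lam a t : 0 < t -> fmap lam a t = FF lam a t.
Proof.
  intros Ht. unfold fmap, FF, rpow.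
  destruct (Rle_dec t 0); [lra|]. unfold Rpower. rewrite <- exp_plus. reflexivity.
Qed.

Lemma FF_cont lam a t : 0 < t -> continuity_pt (FF lam a) t.
Proof.
  intros Ht. unfold FF.
  apply (continuity_pt_comp (fun t => lam * ln t + (a - t)) exp).
  - apply continuity_pt_plus.
    + apply continuity_pt_mult. apply continuity_pt_const. intros ? ?; reflexivity.
      apply derivable_continuous_pt. exists (/ t). apply derivable_pt_lim_ln; auto.
    + apply continuity_pt_minus. apply continuity_pt_const. intros ? ?; reflexivity.
      apply derivable_continuous_pt, derivable_pt_id.
  - apply derivable_continuous_pt, derivable_pt_exp.
Qed.

Lemma FF_below lam a ustar u : 1 < lam -> smallest_pos_fixed_point lam a ustar ->
  0 < u < ustar -> FF lam a u < u.
Proof.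
  intros Hl [Hu0 [Hfix Hmin]] Hu.
  destruct (Rlt_or_le (FF lam a u) u) as [H|H]; auto. exfalso.
  destruct (Rle_lt_or_eq_dec _ _ H) as [H1|H1].
  2:{ assert (ustar <= u). apply Hmin. lra. rewrite fmap_FF; lra. lra. }
  set (c := exp (- a / (lam - 1))).
  assert (Hc : 0 < c) by apply exp_pos.
  set (e := Rmin (u/2) (c/2)).
  assert (He0 : 0 < e) by (unfold e; apply Rmin_pos; lra).
  assert (Heu : e < u) by (unfold e; pose proof (Rmin_l (u/2) (c/2)); lra).
  assert (Hec : e < c) by (unfold e; pose proof (Rmin_r (u/2) (c/2)); lra).
  assert (Hln : ln e < - a / (lam - 1)).
  { unfold c in Hec. rewrite <- (ln_exp (- a / (lam - 1))). apply ln_increasing; auto. }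
  assert (Hln2 : (lam - 1) * ln e < - a).
  { apply Rmult_lt_compat_l with (r := lam - 1) in Hln; [|lra].
    replace ((lam - 1) * (- a / (lam - 1))) with (- a) in Hln by (field; lra). lra. }
  assert (HFe : FF lam a e < e).
  { unfold FF. assert (exp (lam * ln e + (a - e)) < exp (ln e)) by (apply exp_increasing; nra).
    rewrite exp_ln in H0; auto. }
  destruct (Ranalysis5.IVT_interv (fun t => FF lam a t - t) e u) as [z [Hz Hz2]].
  - intros t Ht. apply continuity_pt_minus. apply FF_cont; lra.
    apply derivable_continuous_pt, derivable_pt_id.
  - auto.
  - lra.
  - lra.
  - assert (ustar <= z). apply Hmin. lra. rewrite fmap_FF; lra. lra.
Qed.

Theorem mainTheorem7
  (lam : R) (as_ bs : nat -> R) (a ustar : R) (x : nat -> R) (k : nat) :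
  1 < lam ->
  is_lub (fun y => exists n : nat, (1 <= n)%nat /\ y = as_ n) a ->
  (forall n : nat, (1 <= n)%nat -> 0 <= bs n) ->
  (lam - 1) * (1 - ln (lam - 1)) <= a ->
  smallest_pos_fixed_point lam a ustar ->
  (forall n : nat, 0 <= x n) ->
  (forall n : nat, (1 <= n)%nat ->
     x (S n) = rpow (x (n - 1)%nat) lam * exp (as_ n - bs n * x n - x (n - 1)%nat)) ->
  0 < x k < ustar ->
  (forall j : nat, x (k + 2 * S j)%nat < x (k + 2 * j)%nat) /\
  Un_cv (fun j : nat => x (k + 2 * j)%nat) 0.
Proof.
  intros Hl Hlub Hb Ha Hsm Hx Hrec Hk.
  set (y := fun j => x (k + 2 * j)%nat).
  assert (Hstep : forall j, 0 < y j -> 0 < y (S j) /\ y (S j) <= FF lam a (y j)).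
  { intros j Hy. unfold y in *.
    replace (k + 2 * S j)%nat with (S (k + 2 * j + 1)) by lia.
    rewrite Hrec by lia.
    replace (k + 2 * j + 1 - 1)%nat with (k + 2 * j)%nat by lia.
    set (n := (k + 2 * j + 1)%nat).
    set (v := x (k + 2 * j)%nat) in *.
    unfold rpow. destruct (Rle_dec v 0); [lra|]. unfold Rpower. split.
    - apply Rmult_lt_0_compat; apply exp_pos.
    - unfold FF. rewrite <- exp_plus.
      assert (as_ n <= a). { apply (proj1 Hlub). exists n. split; [unfold n; lia|auto]. }
      assert (0 <= bs n * x n). { apply Rmult_le_pos; [apply Hb; unfold n; lia| apply Hx]. }
      destruct (Rle_lt_or_eq_dec (lam * ln v + (as_ n - bs n * x n - v)) (lam * ln v + (a - v))) as [Hq|Hq]; [lra| |].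
      + left. apply exp_increasing; exact Hq.
      + rewrite Hq. lra. }
  assert (Hbd : forall j, 0 < y j < ustar).
  { induction j. unfold y. replace (k + 2 * 0)%nat with k by lia. auto.
    destruct (Hstep j (proj1 IHj)) as [H1 H2].
    pose proof (FF_below lam a ustar (y j) Hl Hsm IHj). lra. }
  assert (Hdec : forall j, y (S j) < y j).
  { intros j. destruct (Hstep j (proj1 (Hbd j))) as [H1 H2].
    pose proof (FF_below lam a ustar (y j) Hl Hsm (Hbd j)). lra. }
  split. { exact Hdec. }
  assert (Hd : Un_decreasing y). { intros n. left. apply Hdec. }
  assert (Hlb : has_lb y). { exists 0. intros z [n ->]. unfold opp_seq. pose proof (Hbd n). lra. }
  destruct (decreasing_cv y Hd Hlb) as [L HL].
  assert (HL0 : 0 <= L).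
  { apply (@Rle_cv_lim (fun _ : nat => 0) y 0 L). intros n; pose proof (Hbd n); lra.
    intros eps Heps. exists 0%nat. intros. rewrite R_dist_eq. auto. auto. }
  assert (HLu : L < ustar).
  { pose proof (decreasing_ineq y L Hd HL 0). pose proof (Hbd 0%nat). lra. }
  destruct (Rle_lt_or_eq_dec 0 L HL0) as [Hpos|Heq].
  2:{ rewrite Heq. exact HL. }
  exfalso.
  assert (HS : Un_cv (fun j => y (S j)) L).
  { intros eps Heps. destruct (HL eps Heps) as [N HN]. exists N. intros n Hn. apply HN. lia. }
  assert (HF : Un_cv (fun j => FF lam a (y j)) (FF lam a L)).
  { apply continuity_seq; auto. apply FF_cont; auto. }
  assert (L <= FF lam a L).
  { apply (@Rle_cv_lim (fun j => y (S j)) (fun j => FF lam a (y j)) L (FF lam a L)); auto.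
    intros n. apply (Hstep n (proj1 (Hbd n))). }
  pose proof (FF_below lam a ustar L Hl Hsm (conj Hpos HLu)). lra.
Qed.
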